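(* Let $\ket\Psi_{ABC}=\ket{\psi_1}_{A_1B_1}\otimes\ket{\psi_2}_{A_2C_1}\otimes\ket{\psi_3}_{B_2C_2}$ with $\mathcal H_A=\mathcal H_{A_1}\otimes\mathcal H_{A_2}$, $\mathcal H_B=\mathcal H_{B_1}\otimes\mathcal H_{B_2}$, $\mathcal H_C=\mathcal H_{C_1}\otimes\mathcal H_{C_2}$ and $\ket{\psi_i}$ unit vectors. Then for every integer $n\ge2$, $Z_n(A:B:C)_{\ket\Psi}>0$ and $$G_n(A:B:C)_{\ket\Psi}=\tfrac12\big(S_n(A)+S_n(B)+S_n(C)\big),$$ where $S_n(X)=\frac{1}{1-n}\log\operatorname{tr}\rho_X^n$ is the Rényi-$n$ entropy of the reduced state of $\ket\Psi$ on $X$. In particular $G(A:B:C)_{\ket\Psi}=\tfrac12(S_2(A)+S_2(B)+S_2(C))$.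
   Context: For a subsystem $X$ and $\pi\in S_N$, $\pi_X$ permutes the $N$ copies of $\mathcal H_X$ according to $\pi$ and acts trivially otherwise. For integer $n\ge2$, arrange $1,\dots,n^2$ in an $n\times n$ array row by row; $\pi^{(1)}\in S_{n^2}$ is the product of the $n$ cycles $(kn+1,\dots,kn+n)$, $k=0,\dots,n-1$ (cycling each row), and $\pi^{(2)}\in S_{n^2}$ is the product of the $n$ cycles $(j,n+j,\dots,(n-1)n+j)$, $j=1,\dots,n$ (cycling each column). $Z_n(A:B:C)_{\ket\Psi}=\bra\Psi^{\otimes n^2}(\pi^{(1)}_A\otimes\pi^{(2)}_B\otimes\mathrm{id}_C)\ket\Psi^{\otimes n^2}$ and, when $Z_n>0$, $G_n(A:B:C)_{\ket\Psi}=\frac{1}{n(1-n)}\log Z_n(A:B:C)_{\ket\Psi}$. For $n=2$, $G_2=G$ where $G(A:B:C)=-\tfrac12\log\bra\Psi^{\otimes4}((12)(34)_A\otimes(13)(24)_B\otimes(14)(23)_C)\ket\Psi^{\otimes4}$. *)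

(* Defs.v *)
From HB Require Import structures.
From mathcomp Require Import all_boot all_order all_algebra all_fingroup all_reals.
From mathcomp Require Import exp complex.
Set Implicit Arguments. Unset Strict Implicit. Unset Printing Implicit Defensive.
Import GRing.Theory Num.Theory.
Local Open Scope ring_scope.

Section QDefs.
Variable R : realType.
Local Notation C := R[i].

(* A pure state of ABC is a vector Psi : A * B * C -> C (computational basis). *)

(* |Psi>^{\otimes N}, copies indexed by the finite type I (#|I| = N). *)
Definition tpow (T I : finType) (Psi : T -> C) : {ffun I -> T} -> C :=
  fun x => \prod_k Psi (x k).

(* pA_A (x) pB_B (x) pC_C acting on (H_A (x) H_B (x) H_C)^{\otimes N}:
   the permutation p sends the content of copy k to copy p k, i.e.
   (P f)(x) = f (x \o p) on basis coefficients. *)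
Definition permop (A B Cs I : finType) (pA pB pC : {perm I})
  (f : {ffun I -> A * B * Cs} -> C) : {ffun I -> A * B * Cs} -> C :=
  fun x => f [ffun k => ((x (pA k)).1.1, (x (pB k)).1.2, (x (pC k)).2)].

Definition inner (T : finType) (g h : T -> C) : C := \sum_x (g x)^* * h x.

Definition permexp (A B Cs I : finType) (Psi : A * B * Cs -> C)
  (pA pB pC : {perm I}) : C :=
  inner (tpow (I:=I) Psi) (permop pA pB pC (tpow Psi)).

(* Copies for Z_n: the n x n array, copy (r, c) being entry r*n + c + 1. *)
Definition rowcyc_fun n (rc : 'I_n * 'I_n) : 'I_n * 'I_n := (rc.1, ordS rc.2).
Definition colcyc_fun n (rc : 'I_n * 'I_n) : 'I_n * 'I_n := (ordS rc.1, rc.2).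
Lemma rowcyc_inj n : injective (@rowcyc_fun n).
Proof. move=> [a b] [c d] /= [-> E]; congr pair; apply: (@ordS_inj n); exact: val_inj. Qed.
Lemma colcyc_inj n : injective (@colcyc_fun n).
Proof. move=> [a b] [c d] /= [E ->]; congr pair; apply: (@ordS_inj n); exact: val_inj. Qed.
Definition pi1 n : {perm 'I_n * 'I_n} := perm (@rowcyc_inj n).
Definition pi2 n : {perm 'I_n * 'I_n} := perm (@colcyc_inj n).

Definition Zn (A B Cs : finType) (Psi : A * B * Cs -> C) (n : nat) : C :=
  permexp Psi (pi1 n) (pi2 n) 1%g.

(* G_n = 1/(n(1-n)) log Z_n (Z_n is real positive when this is used). *)
Definition Gn (A B Cs : finType) (Psi : A * B * Cs -> C) (n : nat) : R :=
  (n%:R * (1 - n%:R))^-1 * ln (complex.Re (Zn Psi n)).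

(* G(A:B:C) on 4 copies, with (12)(34)_A (13)(24)_B (14)(23)_C (0-based). *)
Definition o4 (k : nat) : 'I_4 := inord k.
Definition G (A B Cs : finType) (Psi : A * B * Cs -> C) : R :=
  - 2^-1 * ln (complex.Re (permexp Psi
      (tperm (o4 0) (o4 1) * tperm (o4 2) (o4 3))%g
      (tperm (o4 0) (o4 2) * tperm (o4 1) (o4 3))%g
      (tperm (o4 0) (o4 3) * tperm (o4 1) (o4 2))%g)).

Definition rhoA (A B Cs : finType) (Psi : A * B * Cs -> C) (a a' : A) : C :=
  \sum_b \sum_c Psi (a, b, c) * (Psi (a', b, c))^*.
Definition rhoB (A B Cs : finType) (Psi : A * B * Cs -> C) (b b' : B) : C :=
  \sum_a \sum_c Psi (a, b, c) * (Psi (a, b', c))^*.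
Definition rhoC (A B Cs : finType) (Psi : A * B * Cs -> C) (c c' : Cs) : C :=
  \sum_a \sum_b Psi (a, b, c) * (Psi (a, b, c'))^*.

Definition kmul (X : finType) (M N : X -> X -> C) : X -> X -> C :=
  fun i j => \sum_k M i k * N k j.
Definition kid (X : finType) : X -> X -> C := fun i j => (i == j)%:R.
Definition kpow (X : finType) (M : X -> X -> C) (n : nat) : X -> X -> C :=
  iter n (kmul M) (@kid X).
Definition ktr (X : finType) (M : X -> X -> C) : C := \sum_i M i i.

(* Renyi-n entropy S_n(rho) = 1/(1-n) log tr rho^n (tr rho^n is real). *)
Definition renyi (X : finType) (rho : X -> X -> C) (n : nat) : R :=
  (1 - n%:R)^-1 * ln (complex.Re (ktr (kpow rho n))).

Definition tri_state (A1 A2 B1 B2 C1 C2 : finType)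
  (psi1 : A1 * B1 -> C) (psi2 : A2 * C1 -> C) (psi3 : B2 * C2 -> C)
  (x : (A1 * A2) * (B1 * B2) * (C1 * C2)) : C :=
  psi1 (x.1.1.1, x.1.2.1) * psi2 (x.1.1.2, x.2.1) * psi3 (x.1.2.2, x.2.2).

Definition unit_vec (T : finType) (v : T -> C) : Prop := \sum_x v x * (v x)^* = 1.

End QDefs.

(* Main.v *)
Require Import Defs.
From HB Require Import structures.
From mathcomp Require Import all_boot all_order all_algebra all_fingroup all_reals.
From mathcomp Require Import exp complex.
From mathcomp Require Import ring zify.
Import Order.TTheory GRing.Theory Num.Theory.
Local Open Scope ring_scope.
Set Implicit Arguments. Unset Strict Implicit. Unset Printing Implicit Defensive.

Section Fun.
Variable V : nmodType.

Lemma sum_ffun_pair (I X Y : finType) (F : {ffun I -> X * Y} -> V) :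
  \sum_f F f = \sum_(g : {ffun I -> X}) \sum_(h : {ffun I -> Y}) F [ffun k => (g k, h k)].
Proof.
rewrite pair_bigA /=.
rewrite (reindex (fun p : {ffun I -> X} * {ffun I -> Y} => [ffun k => (p.1 k, p.2 k)])) //.
exists (fun f : {ffun I -> X * Y} => ([ffun k => (f k).1], [ffun k => (f k).2])).
  by move=> [g h] _ /=; congr pair; apply/ffunP => k; rewrite !ffunE.
by move=> f _; apply/ffunP => k; rewrite !ffunE; case: (f k).
Qed.

Lemma sum_ffun_map (I T T' : finType) (e : T' -> T) (e' : T -> T')
  (ee : cancel e e') (ee' : cancel e' e) (F : {ffun I -> T} -> V) :
  \sum_f F f = \sum_(g : {ffun I -> T'}) F [ffun k => e (g k)].
Proof.
rewrite (reindex (fun g : {ffun I -> T'} => [ffun k => e (g k)])) //.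
exists (fun f : {ffun I -> T} => [ffun k => e' (f k)]).
  by move=> g _; apply/ffunP => k; rewrite !ffunE ee.
by move=> f _; apply/ffunP => k; rewrite !ffunE ee'.
Qed.

Lemma sum_ffun_comp (I J X : finType) (phi : J -> I) (phi' : I -> J)
  (p1 : cancel phi phi') (p2 : cancel phi' phi) (G : {ffun J -> X} -> V) :
  \sum_(x : {ffun I -> X}) G [ffun j => x (phi j)] = \sum_(y : {ffun J -> X}) G y.
Proof.
symmetry.
rewrite (reindex (fun x : {ffun I -> X} => [ffun j => x (phi j)])) //.
exists (fun y : {ffun J -> X} => [ffun i => y (phi' i)]).
  by move=> x _; apply/ffunP => k; rewrite !ffunE p2.
by move=> y _; apply/ffunP => k; rewrite !ffunE p1.
Qed.

Lemma sum_ffun_curry (J1 J2 X : finType) (F : {ffun J1 * J2 -> X} -> V) :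
  \sum_f F f = \sum_(g : {ffun J1 -> {ffun J2 -> X}}) F [ffun p => g p.1 p.2].
Proof.
rewrite (reindex (fun g : {ffun J1 -> {ffun J2 -> X}} => [ffun p => g p.1 p.2])) //.
exists (fun f : {ffun J1 * J2 -> X} => [ffun a => [ffun b => f (a, b)]]).
  by move=> g _; apply/ffunP => a; apply/ffunP => b; rewrite !ffunE.
by move=> f _; apply/ffunP => [[a b]]; rewrite !ffunE.
Qed.

Definition cons_ffun (X : finType) m (a : X) (g : {ffun 'I_m -> X}) : {ffun 'I_m.+1 -> X} :=
  [ffun i => if unlift ord0 i is Some j then g j else a].

Lemma sum_ffun_cons (X : finType) m (F : {ffun 'I_m.+1 -> X} -> V) :
  \sum_f F f = \sum_(a : X) \sum_(g : {ffun 'I_m -> X}) F (cons_ffun a g).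
Proof.
rewrite pair_bigA /=.
rewrite (reindex (fun p : X * {ffun 'I_m -> X} => cons_ffun p.1 p.2)) //.
exists (fun f : {ffun 'I_m.+1 -> X} => (f ord0, [ffun j => f (lift ord0 j)])).
  move=> [a g] _ /=; rewrite /cons_ffun ffunE unlift_none; congr pair.
  by apply/ffunP => j; rewrite !ffunE liftK.
move=> f _; apply/ffunP => i; rewrite /cons_ffun !ffunE.
by case: unliftP => [j ->|->]; rewrite ?ffunE.
Qed.

End Fun.

Lemma codom_cons (X : finType) m (a : X) (g : {ffun 'I_m -> X}) :
  codom (cons_ffun a g) = a :: codom g.
Proof.
rewrite !codomE enum_ordSl /= /cons_ffun ffunE unlift_none -map_comp; congr cons.
by apply: eq_map => j /=; rewrite ffunE liftK.
Qed.

Section Kern.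
Variable R : realType.
Local Notation C := R[i].
Variable X : finType.
Variable K : X -> X -> C.

Fixpoint pathp (a : X) (s : seq X) (b : X) : C :=
  if s is y :: s' then K a y * pathp y s' b else K a b.

Lemma kpow_path m (a b : X) :
  kpow K m.+1 a b = \sum_(x : {ffun 'I_m -> X}) pathp a (codom x) b.
Proof.
elim: m a b => [|m IH] a b.
  rewrite /kpow /= /kmul /kid.
  rewrite (bigD1 b) //= eqxx mulr1 big1 ?addr0; last by move=> k /negbTE ->; rewrite mulr0.
  rewrite (eq_bigr (fun _ => K a b)); last first.
    by move=> x _; have /size0nil -> : size (codom x) = 0%N by rewrite size_codom card_ord.
  rewrite sumr_const card_ffun card_ord expn0 //.
rewrite sum_ffun_cons.
have -> : kpow K m.+2 a b = \sum_k K a k * kpow K m.+1 k b by [].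
apply: eq_bigr => y _; rewrite IH mulr_sumr; apply: eq_bigr => g _.
by rewrite codom_cons.
Qed.

Lemma pathp_nth (a b : X) (s : seq X) :
  pathp a s b = \prod_(i < (size s).+1) K (nth a (a :: s) i) (nth a (rcons s b) i).
Proof.
elim: s a => [|y s IH] a /=; first by rewrite big_ord1.
rewrite big_ord_recl /= IH; congr (_ * _); apply: eq_bigr => i _.
by congr K; apply: set_nth_default; rewrite /= ?size_rcons.
Qed.

Lemma cyc_ktr n : (0 < n)%N ->
  \sum_(x : {ffun 'I_n -> X}) \prod_(c : 'I_n) K (x c) (x (ordS c)) = ktr (kpow K n).
Proof.
case: n => // m _; rewrite sum_ffun_cons /ktr; apply: eq_bigr => a _.
rewrite kpow_path; apply: eq_bigr => g _.
rewrite pathp_nth size_codom card_ord; apply: eq_bigr => c _.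
set f := cons_ffun a g.
have nthf (d : 'I_m.+1) : nth a (a :: codom g) d = f d.
  rewrite -codom_cons codomE (nth_map ord0) ?nth_ord_enum //.
  by rewrite -cardE card_ord.
rewrite nthf; congr K.
rewrite nth_rcons size_codom card_ord.
case: (ltnP c m) => Hc.
  have -> : ordS c = lift ord0 (Ordinal Hc).
    by apply: val_inj; rewrite /= /bump leq0n add1n modn_small.
  rewrite /f /cons_ffun ffunE liftK.
  have E : nth a (codom g) c = nth a (codom g) (Ordinal Hc) by [].
  by rewrite E codomE (nth_map (Ordinal Hc)) ?nth_ord_enum // -cardE card_ord.
have Em : nat_of_ord c = m by apply/eqP; rewrite eqn_leq Hc -ltnS ltn_ord.
rewrite if_same.
have -> : ordS c = ord0 by apply: val_inj; rewrite /= Em modnn.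
by rewrite /f /cons_ffun ffunE unlift_none.
Qed.

End Kern.

Section Perm.
Variable R : realType.
Local Notation C := R[i].

Definition Kx (X Y : finType) (psi : X * Y -> C) (a a' : X) : C :=
  \sum_y (psi (a, y))^* * psi (a', y).

Definition Fperm (I X Y : finType) (psi : X * Y -> C) (s t : {perm I}) : C :=
  \sum_(u : {ffun I -> X * Y}) \prod_k ((psi (u k))^* * psi ((u (s k)).1, (u (t k)).2)).

Lemma Fperm_E (I X Y : finType) (psi : X * Y -> C) (s t : {perm I}) :
  Fperm psi s t = \sum_(x : {ffun I -> X}) \prod_k Kx psi (x k) (x (s ((t^-1)%g k))).
Proof.
rewrite /Fperm sum_ffun_pair; apply: eq_bigr => g _.
transitivity (\sum_(h : {ffun I -> Y}) \prod_k ((psi (g k, h k))^* * psi (g (s ((t^-1)%g k)), h k))).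
  apply: eq_bigr => h _; rewrite !big_split /=; congr (_ * _).
    by apply: eq_bigr => k _; rewrite ffunE.
  rewrite (reindex_inj (@perm_inj _ (t^-1)%g)) /=.
  by apply: eq_bigr => k _; rewrite !ffunE /= permKV.
rewrite /Kx bigA_distr_bigA /=; apply: eq_bigr => h _.
by apply: eq_bigr.
Qed.

Lemma E_cyc (I X : finType) n (p : I -> I) (phi : 'I_n * 'I_n -> I) (phi' : I -> 'I_n * 'I_n)
  (c1 : cancel phi phi') (c2 : cancel phi' phi)
  (hphi : forall r c, p (phi (r, c)) = phi (r, ordS c)) (Kk : X -> X -> C) :
  \sum_(x : {ffun I -> X}) \prod_k Kk (x k) (x (p k)) =
  (\sum_(x : {ffun 'I_n -> X}) \prod_c Kk (x c) (x (ordS c))) ^+ n.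
Proof.
pose G (y : {ffun 'I_n * 'I_n -> X}) := \prod_q Kk (y q) (y (q.1, ordS q.2)).
transitivity (\sum_(x : {ffun I -> X}) G [ffun j => x (phi j)]).
  apply: eq_bigr => x _.
  rewrite (reindex phi); last by apply: onW_bij; exists phi'.
  by apply: eq_bigr => [[r c]] _; rewrite !ffunE hphi.
rewrite (sum_ffun_comp c1 c2) sum_ffun_curry.
transitivity (\sum_(z : {ffun 'I_n -> {ffun 'I_n -> X}})
   \prod_(r : 'I_n) \prod_(c : 'I_n) Kk (z r c) (z r (ordS c))).
  apply: eq_bigr => z _; rewrite /G pair_big /=.
  by apply: eq_bigr => [[r c]] _; rewrite !ffunE.
rewrite -(bigA_distr_bigA (fun (r : 'I_n) (g : {ffun 'I_n -> X}) => \prod_c Kk (g c) (g (ordS c)))) /=.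
by rewrite prodr_const card_ord.
Qed.

End Perm.

Section Tri.
Variable R : realType.
Local Notation C := R[i].
Variables A1 A2 B1 B2 C1 C2 : finType.
Variables (psi1 : A1 * B1 -> C) (psi2 : A2 * C1 -> C) (psi3 : B2 * C2 -> C).

Lemma sum3 (U V W : finType) (f : U -> C) (g : V -> C) (h : W -> C) :
  \sum_u \sum_v \sum_w (f u * g v * h w) = (\sum_u f u) * (\sum_v g v) * (\sum_w h w).
Proof.
symmetry; rewrite -mulrA big_distrl /=; apply: eq_bigr => u _.
rewrite big_distrl /= big_distrr /=; apply: eq_bigr => v _.
by rewrite mulrA big_distrr.
Qed.

Lemma permexp_tri (I : finType) (pA pB pC : {perm I}) :
  permexp (tri_state psi1 psi2 psi3) pA pB pC =
  Fperm psi1 pA pB * Fperm psi2 pA pC * Fperm psi3 pB pC.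
Proof.
pose e (t : (A1 * B1) * (A2 * C1) * (B2 * C2)) : (A1 * A2) * (B1 * B2) * (C1 * C2) :=
  ((t.1.1.1, t.1.2.1), (t.1.1.2, t.2.1), (t.1.2.2, t.2.2)).
pose e' (t : (A1 * A2) * (B1 * B2) * (C1 * C2)) : (A1 * B1) * (A2 * C1) * (B2 * C2) :=
  ((t.1.1.1, t.1.2.1), (t.1.1.2, t.2.1), (t.1.2.2, t.2.2)).
have ee : cancel e e' by move=> [[[? ?] [? ?]] [? ?]].
have ee' : cancel e' e by move=> [[[? ?] [? ?]] [? ?]].
rewrite /permexp /inner /permop /tpow (sum_ffun_map ee ee') sum_ffun_pair.
rewrite /Fperm -sum3 [LHS]sum_ffun_pair.
apply: eq_bigr => u _; apply: eq_bigr => v _; apply: eq_bigr => w _.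
rewrite rmorph_prod -big_split /= -!big_split /=; apply: eq_bigr => k _.
rewrite !ffunE /tri_state /= !rmorphM /=.
by case: (u k) => ? ?; case: (v k) => ? ?; case: (w k) => ? ?; ring.
Qed.

End Tri.

Section Mx.
Variable R : realType.
Local Notation C := R[i].

Definition mxadj p q (M : 'M[C]_(p, q)) : 'M[C]_(q, p) := \matrix_(i, j) (M j i)^*.

Lemma mxadjK p q (M : 'M[C]_(p, q)) : mxadj (mxadj M) = M.
Proof. by apply/matrixP => i j; rewrite !mxE conjCK. Qed.

Lemma mxadj_mul p q r (A : 'M[C]_(p, q)) (B : 'M[C]_(q, r)) :
  mxadj (A *m B) = mxadj B *m mxadj A.
Proof.
apply/matrixP => i j; rewrite !mxE rmorph_sum; apply: eq_bigr => k _.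
by rewrite !mxE rmorphM mulrC.
Qed.

Lemma mxadj1 p : mxadj (1%:M : 'M[C]_p) = 1%:M.
Proof. by apply/matrixP => i j; rewrite !mxE eq_sym; case: (i == j); rewrite /= ?conjC1 ?conjC0. Qed.

Lemma exprSmx p (A : 'M[C]_p) k : A ^+ k.+1 = A *m A ^+ k.
Proof. by rewrite exprS mulmxE. Qed.

Lemma exprSrmx p (A : 'M[C]_p) k : A ^+ k.+1 = A ^+ k *m A.
Proof. by rewrite exprSr mulmxE. Qed.

Lemma expr0mx p (A : 'M[C]_p) : A ^+ 0 = 1%:M.
Proof. by rewrite expr0. Qed.

Lemma mxadjX p (A : 'M[C]_p) k : mxadj (A ^+ k) = (mxadj A) ^+ k.
Proof.
elim: k => [|k IH]; first by rewrite !expr0mx mxadj1.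
by rewrite exprSmx mxadj_mul IH -exprSrmx.
Qed.

Lemma trmxX p (A : 'M[C]_p) k : (A ^T) ^+ k = (A ^+ k)^T.
Proof.
elim: k => [|k IH]; first by rewrite !expr0mx trmx1.
by rewrite exprSmx IH -trmx_mul -exprSrmx.
Qed.

Lemma tr_norm p q (N : 'M[C]_(p, q)) :
  \tr (N *m mxadj N) = \sum_i \sum_j N i j * (N i j)^*.
Proof.
rewrite /mxtrace; apply: eq_bigr => i _; rewrite mxE; apply: eq_bigr => j _.
by rewrite mxE.
Qed.

Lemma tr_norm_gt0 p q (N : 'M[C]_(p, q)) : N != 0 -> 0 < \tr (N *m mxadj N).
Proof.
move=> N0; have [i [j Nij]] : exists i j, N i j != 0.
  case: (boolP [exists i, exists j, N i j != 0]) => [/existsP [i /existsP [j Hij]]|H].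
    by exists i, j.
  move/eqP: N0; case; apply/matrixP => i j; rewrite mxE.
  apply/eqP; move: H; rewrite negb_exists => /forallP /(_ i).
  by rewrite negb_exists => /forallP /(_ j) /negPn.
rewrite tr_norm (bigD1 i) //= (bigD1 j) //=.
apply: ltr_wpDr; first by apply: sumr_ge0 => k _; apply: sumr_ge0 => l _; apply: mul_conjC_ge0.
apply: ltr_wpDr; first by apply: sumr_ge0 => l _; apply: mul_conjC_ge0.
by rewrite mul_conjC_gt0.
Qed.

Variables (p q : nat) (M : 'M[C]_(p, q)).
Let H := M *m mxadj M.

Lemma mxadjH : mxadj H = H.
Proof. by rewrite /H mxadj_mul mxadjK. Qed.

Lemma tr_powH_gt0 n : M != 0 -> (0 < n)%N -> 0 < \tr (H ^+ n).
Proof.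
move=> M0; elim/ltn_ind: n => n IH n0.
have En := odd_double_half n.
case Ho: (odd n) En => /= En.
  set k := n./2 in En.
  have -> : H ^+ n = (H ^+ k *m M) *m mxadj (H ^+ k *m M).
    rewrite mxadj_mul mxadjX mxadjH.
    have -> : n = (k + 1 + k)%N by rewrite -En /= -addnn; lia.
    by rewrite !exprD expr1 -!mulmxE /H !mulmxA.
  apply: tr_norm_gt0; case: (posnP k) => k0.
    by rewrite k0 expr0mx mul1mx.
  apply/negP => /eqP Hk0.
  have : 0 < \tr (H ^+ k.+1) by apply: IH => //; rewrite -En -addnn; lia.
  by rewrite exprSrmx /H mulmxA Hk0 mul0mx mxtrace0 ltxx.
set k := n./2 in En; rewrite add0n in En.
have k0 : (0 < k)%N by move: n0; rewrite -En; case: k {En}.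
have Hk : 0 < \tr (H ^+ k) by apply: IH => //; rewrite -En -addnn; lia.
have -> : H ^+ n = (H ^+ k) *m mxadj (H ^+ k).
  by rewrite mxadjX mxadjH -En -addnn exprD -mulmxE.
apply: tr_norm_gt0; apply/negP => /eqP Hk0.
by move: Hk; rewrite Hk0 mxtrace0 ltxx.
Qed.

Lemma tr_pow_swap n : (0 < n)%N -> \tr (H ^+ n) = \tr ((mxadj M *m M) ^+ n).
Proof.
case: n => // k _.
have E : forall k, H ^+ k.+1 = M *m (mxadj M *m M) ^+ k *m mxadj M.
  elim=> [|j IHj]; first by rewrite expr1 expr0mx mulmx1.
  by rewrite [in LHS]exprSmx IHj [in RHS]exprSmx /H !mulmxA.
by rewrite E mxtrace_mulC mulmxA -exprSmx.
Qed.

End Mx.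

Section KM.
Variable R : realType.
Local Notation C := R[i].

Definition kmx (X : finType) (K : X -> X -> C) : 'M[C]_#|X| :=
  \matrix_(i, j) K (enum_val i) (enum_val j).

Lemma sum_enum (X : finType) (F : X -> C) : \sum_x F x = \sum_(i < #|X|) F (enum_val i).
Proof.
rewrite (reindex (@enum_val X predT)) //=.
by apply: onW_bij; exists (@enum_rank X) => x; rewrite ?enum_valK ?enum_rankK.
Qed.

Lemma kmx_mul (X : finType) (K L : X -> X -> C) : kmx (kmul K L) = kmx K *m kmx L.
Proof.
apply/matrixP => i j; rewrite !mxE /kmul sum_enum; apply: eq_bigr => k _.
by rewrite !mxE.
Qed.

Lemma kmx_id (X : finType) : kmx (@kid R X) = 1%:M.
Proof. by apply/matrixP => i j; rewrite !mxE /kid (inj_eq enum_val_inj). Qed.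

Lemma kmx_pow (X : finType) (K : X -> X -> C) n : kmx (kpow K n) = (kmx K) ^+ n.
Proof.
elim: n => [|n IH]; first by rewrite expr0mx -kmx_id.
by rewrite exprSmx -IH -kmx_mul.
Qed.

Lemma ktr_kmx (X : finType) (K : X -> X -> C) : ktr K = \tr (kmx K).
Proof. by rewrite /ktr sum_enum /mxtrace; apply: eq_bigr => i _; rewrite mxE. Qed.

Lemma ktr_kpow (X : finType) (K : X -> X -> C) n : ktr (kpow K n) = \tr ((kmx K) ^+ n).
Proof. by rewrite ktr_kmx kmx_pow. Qed.

Variables (X Y : finType) (psi : X * Y -> C).

Definition mpsi : 'M[C]_(#|X|, #|Y|) := \matrix_(i, j) psi (enum_val i, enum_val j).
Definition rX (a a' : X) : C := \sum_y psi (a, y) * (psi (a', y))^*.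
Definition rY (b b' : Y) : C := \sum_x psi (x, b) * (psi (x, b'))^*.
Definition Kx' (a a' : X) : C := \sum_y (psi (a, y))^* * psi (a', y).
Definition Tn n := \tr ((mpsi *m mxadj mpsi) ^+ n).

Lemma kmx_rX : kmx rX = mpsi *m mxadj mpsi.
Proof.
apply/matrixP => i j; rewrite !mxE /rX sum_enum; apply: eq_bigr => k _.
by rewrite !mxE.
Qed.

Lemma kmx_rY : kmx rY = (mxadj mpsi *m mpsi)^T.
Proof.
apply/matrixP => i j; rewrite !mxE /rY sum_enum; apply: eq_bigr => k _.
by rewrite !mxE mulrC.
Qed.

Lemma kmx_Kx : kmx Kx' = (mpsi *m mxadj mpsi)^T.
Proof.
apply/matrixP => i j; rewrite !mxE /Kx' sum_enum; apply: eq_bigr => k _.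
by rewrite !mxE mulrC.
Qed.

Lemma Tn_rX n : ktr (kpow rX n) = Tn n.
Proof. by rewrite ktr_kpow kmx_rX. Qed.

Lemma Tn_Kx n : ktr (kpow Kx' n) = Tn n.
Proof. by rewrite ktr_kpow kmx_Kx trmxX mxtrace_tr. Qed.

Lemma Tn_rY n : (0 < n)%N -> ktr (kpow rY n) = Tn n.
Proof. by move=> n0; rewrite ktr_kpow kmx_rY trmxX mxtrace_tr /Tn tr_pow_swap. Qed.

Lemma Tn_gt0 n : unit_vec psi -> (0 < n)%N -> 0 < Tn n.
Proof.
move=> u n0; apply: tr_powH_gt0 => //; apply/eqP => M0.
move: u; rewrite /unit_vec => u.
have : \sum_x psi x * (psi x)^* = 0.
  apply: big1 => [[a b]] _.
  have -> : psi (a, b) = mpsi (enum_rank a) (enum_rank b) by rewrite mxE !enum_rankK.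
  by rewrite M0 mxE mul0r.
by rewrite u => /eqP; rewrite oner_eq0.
Qed.

End KM.

Section Tens.
Variable R : realType.
Local Notation C := R[i].

Lemma sum_pair (U V : finType) (F : U * V -> C) : \sum_p F p = \sum_u \sum_v F (u, v).
Proof. by rewrite pair_bigA; apply: eq_bigr => [[u v]]. Qed.

Lemma kpow_tens (X1 X2 : finType) (K1 : X1 -> X1 -> C) (K2 : X2 -> X2 -> C) n a a' :
  kpow (fun a a' : X1 * X2 => K1 a.1 a'.1 * K2 a.2 a'.2) n a a' =
  kpow K1 n a.1 a'.1 * kpow K2 n a.2 a'.2.
Proof.
elim: n a a' => [|n IH] [a1 a2] [b1 b2].
  rewrite /kpow /= /kid xpair_eqE.
  by case: (a1 == b1); case: (a2 == b2); rewrite /= ?mulr1 ?mulr0 ?mul0r.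
have E (Y : finType) (K : Y -> Y -> C) y y' : kpow K n.+1 y y' = \sum_k K y k * kpow K n k y' by [].
rewrite !E sum_pair big_distrl /=; apply: eq_bigr => k1 _.
rewrite big_distrr /=; apply: eq_bigr => k2 _.
by rewrite IH /=; ring.
Qed.

Lemma ktr_tens (X1 X2 : finType) (K1 : X1 -> X1 -> C) (K2 : X2 -> X2 -> C) n :
  ktr (kpow (fun a a' : X1 * X2 => K1 a.1 a'.1 * K2 a.2 a'.2) n) =
  ktr (kpow K1 n) * ktr (kpow K2 n).
Proof.
rewrite /ktr sum_pair big_distrl /=; apply: eq_bigr => a1 _.
rewrite big_distrr /=; apply: eq_bigr => a2 _.
by rewrite kpow_tens.
Qed.

Lemma L4 (I K J L : finType) (f : I -> C) (g : J -> C) (h : K -> L -> C) :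
  \sum_i \sum_k \sum_j \sum_l (f i * g j * h k l) =
  (\sum_i f i) * (\sum_j g j) * (\sum_k \sum_l h k l).
Proof.
symmetry; rewrite -mulrA big_distrl /=; apply: eq_bigr => i _.
rewrite [in RHS]exchange_big /= big_distrl /= big_distrr /=; apply: eq_bigr => j _.
rewrite mulrA big_distrr /=; apply: eq_bigr => k _.
by rewrite big_distrr /=; apply: eq_bigr => l _.
Qed.

Variables A1 A2 B1 B2 C1 C2 : finType.
Variables (psi1 : A1 * B1 -> C) (psi2 : A2 * C1 -> C) (psi3 : B2 * C2 -> C).
Hypotheses (h1 : unit_vec psi1) (h2 : unit_vec psi2) (h3 : unit_vec psi3).
Local Notation Psi := (tri_state psi1 psi2 psi3).

Lemma rhoA_tri : rhoA Psi = fun a a' => rX psi1 a.1 a'.1 * rX psi2 a.2 a'.2.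
Proof.
apply: boolp.funext => [[a1 a2]]; apply: boolp.funext => [[a1' a2']] /=.
rewrite -[RHS]mulr1 -{1}h3 sum_pair /rX -L4 /rhoA sum_pair.
apply: eq_bigr => b1 _; apply: eq_bigr => b2 _; rewrite sum_pair.
apply: eq_bigr => c1 _; apply: eq_bigr => c2 _.
by rewrite /tri_state /= !rmorphM /=; ring.
Qed.

Lemma rhoB_tri : rhoB Psi = fun b b' => rY psi1 b.1 b'.1 * rX psi3 b.2 b'.2.
Proof.
apply: boolp.funext => [[b1 b2]]; apply: boolp.funext => [[b1' b2']] /=.
rewrite -[RHS]mulr1 -{1}h2 sum_pair /rX /rY -L4 /rhoB sum_pair.
apply: eq_bigr => a1 _; apply: eq_bigr => a2 _; rewrite sum_pair exchange_big /=.
apply: eq_bigr => c2 _; apply: eq_bigr => c1 _.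
by rewrite /tri_state /= !rmorphM /=; ring.
Qed.

Lemma rhoC_tri : rhoC Psi = fun c c' => rY psi2 c.1 c'.1 * rY psi3 c.2 c'.2.
Proof.
apply: boolp.funext => [[c1 c2]]; apply: boolp.funext => [[c1' c2']] /=.
rewrite -[RHS]mulr1 -{1}h1 sum_pair /rY -L4 /rhoC sum_pair exchange_big /=.
apply: eq_bigr => a2 _; apply: eq_bigr => a1 _; rewrite sum_pair exchange_big /=.
apply: eq_bigr => b2 _; apply: eq_bigr => b1 _.
by rewrite /tri_state /= !rmorphM /=; ring.
Qed.

End Tens.

Lemma to4 a b c : (a < 4)%N -> (b < 4)%N -> (c < 4)%N ->
  tperm (o4 a) (o4 b) (o4 c) = o4 (if c == a then b else if c == b then a else c).
Proof.
move=> Ha Hb Hc.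
case: (eqVneq c a) => [->|ca]; first by rewrite tpermL.
case: (eqVneq c b) => [->|cb]; first by rewrite tpermR.
rewrite tpermD //; apply/negP => /eqP E; have := congr1 (@nat_of_ord 4) E;
  rewrite /o4 !inordK // => E'.
  by move: ca; rewrite E' eqxx.
by move: cb; rewrite E' eqxx.
Qed.

Definition t1 (r c : nat) : nat := if c == 0%N then r else (3 - r)%N.
Definition phi1 (p : 'I_2 * 'I_2) : 'I_4 := o4 (t1 p.1 p.2).
Definition phi1' (k : 'I_4) : 'I_2 * 'I_2 :=
  if (k < 2)%N then (inord k, inord 0) else (inord (3 - k), inord 1).

Lemma phi1K : cancel phi1 phi1'.
Proof.
move=> [[[|[|r]] Hr] [[|[|c]] Hc]] //; apply/eqP;
  rewrite /phi1 /phi1' /t1 /= /o4 ?inordK //= xpair_eqE -!val_eqE /= ?inordK.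
all: by [].
Qed.
Lemma phi1K' : cancel phi1' phi1.
Proof.
move=> [[|[|[|[|k]]]] Hk] //; apply/val_inj; rewrite /phi1 /phi1' /t1 /= ?inordK //=.
Qed.

Lemma hphi1 r c : (tperm (o4 0) (o4 1) * tperm (o4 2) (o4 3))%g
   ((tperm (o4 0) (o4 2) * tperm (o4 1) (o4 3))^-1 (phi1 (r, c)))%g = phi1 (r, ordS c).
Proof.
rewrite invMg !tpermV !permM.
case: r c => [[|[|r]] Hr] // [[|[|c]] Hc] //; rewrite /phi1 /t1 /=.
all: by rewrite !to4.
Qed.

Definition t2 (r c : nat) : nat := (r + 2 * c)%N.
Definition phi2 (p : 'I_2 * 'I_2) : 'I_4 := o4 (t2 p.1 p.2).
Definition phi2' (k : 'I_4) : 'I_2 * 'I_2 :=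
  if (k < 2)%N then (inord k, inord 0) else (inord (k - 2), inord 1).

Lemma phi2K : cancel phi2 phi2'.
Proof.
move=> [[[|[|r]] Hr] [[|[|c]] Hc]] //; apply/eqP;
  rewrite /phi2 /phi2' /t2 /= /o4 ?inordK //= xpair_eqE -!val_eqE /= ?inordK.
all: by [].
Qed.
Lemma phi2K' : cancel phi2' phi2.
Proof.
move=> [[|[|[|[|k]]]] Hk] //; apply/val_inj; rewrite /phi2 /phi2' /t2 /= ?inordK //=.
Qed.

Lemma hphi2 r c : (tperm (o4 0) (o4 1) * tperm (o4 2) (o4 3))%g
   ((tperm (o4 0) (o4 3) * tperm (o4 1) (o4 2))^-1 (phi2 (r, c)))%g = phi2 (r, ordS c).
Proof.
rewrite invMg !tpermV !permM.
case: r c => [[|[|r]] Hr] // [[|[|c]] Hc] //; rewrite /phi2 /t2 /=.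
all: by rewrite !to4.
Qed.

Definition t3 (r c : nat) : nat := (2 * r + c)%N.
Definition phi3 (p : 'I_2 * 'I_2) : 'I_4 := o4 (t3 p.1 p.2).
Definition phi3' (k : 'I_4) : 'I_2 * 'I_2 :=
  if (k < 2)%N then (inord 0, inord k) else (inord 1, inord (k - 2)).

Lemma phi3K : cancel phi3 phi3'.
Proof.
move=> [[[|[|r]] Hr] [[|[|c]] Hc]] //; apply/eqP;
  rewrite /phi3 /phi3' /t3 /= /o4 ?inordK //= xpair_eqE -!val_eqE /= ?inordK.
all: by [].
Qed.
Lemma phi3K' : cancel phi3' phi3.
Proof.
move=> [[|[|[|[|k]]]] Hk] //; apply/val_inj; rewrite /phi3 /phi3' /t3 /= ?inordK //=.
Qed.

Lemma hphi3 r c : (tperm (o4 0) (o4 2) * tperm (o4 1) (o4 3))%g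
   ((tperm (o4 0) (o4 3) * tperm (o4 1) (o4 2))^-1 (phi3 (r, c)))%g = phi3 (r, ordS c).
Proof.
rewrite invMg !tpermV !permM.
case: r c => [[|[|r]] Hr] // [[|[|c]] Hc] //; rewrite /phi3 /t3 /=.
all: by rewrite !to4.
Qed.

Section ZnPhi.
Variable m : nat.
Local Notation n := m.+2.

Lemma pi1E (r c : 'I_n) : pi1 n (r, c) = (r, ordS c).
Proof. by rewrite /pi1 permE. Qed.
Lemma pi2E (r c : 'I_n) : pi2 n (r, c) = (ordS r, c).
Proof. by rewrite /pi2 permE. Qed.
Lemma ordS_Z (x : 'I_n) : ordS x = 1 + x.
Proof. exact: (esym (@add_1_Zp n x)). Qed.

Definition phiA (p : 'I_n * 'I_n) : 'I_n * 'I_n := (p.1 - p.2, p.2).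
Definition phiA' (p : 'I_n * 'I_n) : 'I_n * 'I_n := (p.1 + p.2, p.2).
Lemma phiAK : cancel phiA phiA'. Proof. by move=> [r c]; rewrite /phiA /phiA' /= subrK. Qed.
Lemma phiAK' : cancel phiA' phiA. Proof. by move=> [r c]; rewrite /phiA /phiA' /= addrK. Qed.

Lemma hphiA r c : pi1 n ((pi2 n)^-1 (phiA (r, c)))%g = phiA (r, ordS c).
Proof.
have -> : phiA (r, c) = pi2 n (r - c - 1, c).
  by rewrite pi2E ordS_Z /phiA /=; congr pair; rewrite [RHS]addrC subrK.
by rewrite permK pi1E /phiA /= ordS_Z opprD addrA addrAC.
Qed.

Lemma hphiB r c : pi1 n ((1%g : {perm 'I_n * 'I_n})^-1 (r, c))%g = (r, ordS c).
Proof. by rewrite invg1 perm1 pi1E. Qed.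

Lemma hphiC r c : pi2 n ((1%g : {perm 'I_n * 'I_n})^-1 (c, r))%g = (ordS c, r).
Proof. by rewrite invg1 perm1 pi2E. Qed.

End ZnPhi.

Section Final.
Variable R : realType.
Local Notation C := R[i].

Lemma posC (z : C) : 0 < z -> z = (complex.Re z)%:C%C /\ 0 < complex.Re z.
Proof. by case: z => a b; rewrite ltcE /= => /andP [/eqP -> Ha]. Qed.

Lemma Fperm_Tn (I X Y : finType) (psi : X * Y -> C) (s t : {perm I}) n
  (phi : 'I_n * 'I_n -> I) (phi' : I -> 'I_n * 'I_n)
  (c1 : cancel phi phi') (c2 : cancel phi' phi)
  (hphi : forall r c, s ((t^-1)%g (phi (r, c))) = phi (r, ordS c)) :
  (0 < n)%N -> Fperm psi s t = (Tn psi n) ^+ n.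
Proof.
move=> n0; rewrite Fperm_E (E_cyc (p := fun k => s ((t^-1)%g k)) c1 c2 hphi).
by rewrite cyc_ktr // -Tn_Kx.
Qed.


Lemma CX (a : R) k : ((a%:C%C) ^+ k : C) = (a ^+ k)%:C%C.
Proof. by rewrite rmorphXn. Qed.
Lemma CM (a b : R) : ((a%:C%C) * (b%:C%C) : C) = (a * b)%:C%C.
Proof. by rewrite rmorphM. Qed.
Lemma ReC (a : R) : complex.Re (a%:C%C : C) = a.
Proof. by []. Qed.

Lemma final_alg (t1 t2 t3 : R) n : 0 < t1 -> 0 < t2 -> 0 < t3 -> (2 <= n)%N ->
  (n%:R * (1 - n%:R))^-1 *
     ln (complex.Re ((t1%:C%C) ^+ n * (t2%:C%C) ^+ n * (t3%:C%C) ^+ n : C)) =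
  2^-1 * ((1 - n%:R)^-1 * ln (complex.Re (t1%:C%C * t2%:C%C : C)) +
          (1 - n%:R)^-1 * ln (complex.Re (t1%:C%C * t3%:C%C : C)) +
          (1 - n%:R)^-1 * ln (complex.Re (t2%:C%C * t3%:C%C : C))).
Proof.
move=> p1 p2 p3 n2.
rewrite !CX !CM !ReC.
have P1 : t1 \is Num.pos by rewrite posrE.
have P2 : t2 \is Num.pos by rewrite posrE.
have P3 : t3 \is Num.pos by rewrite posrE.
have X1 : t1 ^+ n \is Num.pos by rewrite posrE exprn_gt0.
have X2 : t2 ^+ n \is Num.pos by rewrite posrE exprn_gt0.
have X3 : t3 ^+ n \is Num.pos by rewrite posrE exprn_gt0.
have X12 : t1 ^+ n * t2 ^+ n \is Num.pos by rewrite posrE mulr_gt0 // exprn_gt0.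
have E1 := lnM X12 X3. have E2 := lnM X1 X2. have E3 := lnM P1 P2. have E4 := lnM P1 P3. have E5 := lnM P2 P3.
rewrite E1 E2 E3 E4 E5 (lnXn n p1) (lnXn n p2) (lnXn n p3) -[ln t1 *+ n]mulr_natr -[ln t2 *+ n]mulr_natr -[ln t3 *+ n]mulr_natr.
have N0 : (n%:R : R) != 0 by rewrite pnatr_eq0 -lt0n ltnW.
have N1 : (1 - n%:R : R) != 0 by rewrite subr_eq0 eq_sym pnatr_eq1 gtn_eqF.
set L1 := ln t1. set L2 := ln t2. set L3 := ln t3. set N := (n%:R : R).
field.
by rewrite N0 N1.
Qed.
End Final.
Theorem mainTheorem9 (R : realType) (A1 A2 B1 B2 C1 C2 : finType)
  (psi1 : A1 * B1 -> R[i]) (psi2 : A2 * C1 -> R[i]) (psi3 : B2 * C2 -> R[i])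
  (h1 : unit_vec psi1) (h2 : unit_vec psi2) (h3 : unit_vec psi3) :
  let Psi := tri_state psi1 psi2 psi3 in
  (forall n : nat, (2 <= n)%N ->
     0 < Zn Psi n /\
     Gn Psi n = 2^-1 * (renyi (rhoA Psi) n + renyi (rhoB Psi) n + renyi (rhoC Psi) n))
  /\ G Psi = 2^-1 * (renyi (rhoA Psi) 2 + renyi (rhoB Psi) 2 + renyi (rhoC Psi) 2).
Proof.
move=> Psi.
have HA n : (0 < n)%N -> ktr (kpow (rhoA Psi) n) = Tn psi1 n * Tn psi2 n.
  by move=> n0; rewrite /Psi rhoA_tri // ktr_tens !Tn_rX.
have HB n : (0 < n)%N -> ktr (kpow (rhoB Psi) n) = Tn psi1 n * Tn psi3 n.
  by move=> n0; rewrite /Psi rhoB_tri // ktr_tens Tn_rY // Tn_rX.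
have HC n : (0 < n)%N -> ktr (kpow (rhoC Psi) n) = Tn psi2 n * Tn psi3 n.
  by move=> n0; rewrite /Psi rhoC_tri // ktr_tens !Tn_rY.
split.
  case=> [|[|m]] // _.
  have n0 : (0 < m.+2)%N by [].
  have HZ : Zn Psi m.+2 = (Tn psi1 m.+2) ^+ m.+2 * (Tn psi2 m.+2) ^+ m.+2 * (Tn psi3 m.+2) ^+ m.+2.
    rewrite /Zn /Psi permexp_tri.
    rewrite (Fperm_Tn _ (@phiAK m) (@phiAK' m) (@hphiA m)) //.
    rewrite (Fperm_Tn _ (phi := id) (phi' := id) (fun x => erefl) (fun x => erefl) (@hphiB m)) //.
    by rewrite (Fperm_Tn _ (phi := fun p => (p.2, p.1)) (phi' := fun p => (p.2, p.1))
       (fun x => ltac:(by case: x)) (fun x => ltac:(by case: x)) (fun r c => @hphiC m r c)).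
  have [e1 q1] := posC (Tn_gt0 h1 n0).
  have [e2 q2] := posC (Tn_gt0 h2 n0).
  have [e3 q3] := posC (Tn_gt0 h3 n0).
  split.
    rewrite HZ e1 e2 e3 !CX !CM ltcR.
    by apply: mulr_gt0; [apply: mulr_gt0|]; apply: exprn_gt0.
  rewrite /Gn /renyi HZ HA // HB // HC // e1 e2 e3.
  rewrite !mulrDr.
  have := final_alg (n := m.+2) q1 q2 q3 isT.
  by rewrite !mulrDr.
have n0 : (0 < 2)%N by [].
have [e1 q1] := posC (Tn_gt0 h1 n0).
have [e2 q2] := posC (Tn_gt0 h2 n0).
have [e3 q3] := posC (Tn_gt0 h3 n0).
rewrite /G /Psi permexp_tri.
rewrite (Fperm_Tn _ phi1K phi1K' hphi1) //.
rewrite (Fperm_Tn _ phi2K phi2K' hphi2) //.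
rewrite (Fperm_Tn _ phi3K phi3K' hphi3) //.
rewrite /renyi -/Psi HA // HB // HC // e1 e2 e3.
have := final_alg (n := 2) q1 q2 q3 isT.
have -> : ((2%:R : R) * (1 - 2%:R))^-1 = - 2^-1.
  rewrite (_ : (1 - 2%:R : R) = -1); last by rewrite -addn1 natrD opprD addrA subrr sub0r.
  by rewrite mulrN1 invrN.
by rewrite !mulrDr.
Qed.
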